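(* Let $P(x)\in\mathbb{Z}[x]$ have degree $d\ge2$ and at least two distinct complex roots. Let $a,b$ be distinct positive integers. Then the polynomial $a\,P(y)-b\,P(x)\in\mathbb{C}[x,y]$ has no factor in $\mathbb{C}[x,y]$ of degree $1$. *)

(* Defs.v *)
From mathcomp Require Import all_boot all_algebra.
From mathcomp Require Export mpoly.
From mathcomp.real_closed Require Export complex.
From mathcomp Require Export Rstruct.
Import GRing.Theory.
Local Open Scope ring_scope.

Definition CC : numClosedFieldType := complex Rdefinitions.R.

Definition polyCC (P : {poly int}) : {poly CC} := map_poly (fun z : int => z%:~R) P.

(* P(X_i) in C[x,y] = C[X_0, X_1]; x := 'X_0, y := 'X_1 *)
Definition evalX (P : {poly int}) (i : 'I_2) : {mpoly CC[2]} :=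
  (map_poly (fun z : int => (z%:~R : CC)%:MP_[2]) P).['X_i].

Definition abPoly (a b : nat) (P : {poly int}) : {mpoly CC[2]} :=
  a%:R * evalX P 1 - b%:R * evalX P 0.

(* Main.v *)
Require Import Defs.
From mathcomp Require Import all_boot all_algebra.
From mathcomp Require Import ring.
Import GRing.Theory Num.Theory.
Local Open Scope ring_scope.

Lemma inf_roots (p : {poly CC}) : (forall x : CC, root p x) -> p = 0.
Proof.
move=> H; apply/eqP; apply/negPn/negP => p0.
have : (size (mkseq (fun n : nat => (n%:R : CC)) (size p)) < size p)%N.
  apply: max_poly_roots => //.
  - by apply/allP => x _.
  - by apply: mkseq_uniq => i j /eqP; rewrite eqr_nat => /eqP.
by rewrite size_mkseq ltnn.
Qed.

Lemma no_const (Pt : {poly CC}) (k c : CC) : (2 < size Pt)%N -> k != 0 ->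
  (forall x, k * Pt.[x] = c) -> False.
Proof.
move=> sP k0 H.
have: k *: Pt - c%:P = 0.
  by apply: inf_roots => x; rewrite /root !hornerE H subrr.
move/eqP; rewrite subr_eq0 => /eqP E.
have := congr1 (fun q : {poly CC} => size q) E; rewrite /= size_scale // size_polyC => h.
by move: sP; rewrite h; case: (c != 0).
Qed.

Lemma evalX_meval P i (v : 'I_2 -> CC) : meval v (evalX P i) = (polyCC P).[v i].
Proof.
rewrite /evalX -horner_map /= mevalXU -map_poly_comp.
congr (_ .[_]); apply: eq_map_poly => z /=; by rewrite mevalC.
Qed.

Lemma abPoly_meval a b P (v : 'I_2 -> CC) :
  meval v (abPoly a b P) = a%:R * (polyCC P).[v 1] - b%:R * (polyCC P).[v 0].
Proof. by rewrite /abPoly mevalB !mevalM !evalX_meval !rmorph_nat. Qed.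

Lemma L_dec (L : {mpoly CC[2]}) : msize L = 2%N ->
  L = (L@_0%MM)%:MP + L@_U_(0) *: 'X_0 + L@_U_(1) *: 'X_1.
Proof.
move=> sL; apply/mpolyP => m.
rewrite !mcoeffD mcoeffC !mcoeffZ !mcoeffX.
have U10 : (U_(1%R) == U_(0%R) :> 'X_{1..2})%MM = false.
  apply/eqP => /(congr1 (fun m : 'X_{1..2} => m 1%R)); rewrite !mnm1E //.
have [->|m0] := eqVneq m 0%MM.
  by rewrite !mnm1_eq0 !mulr0 mulr1 !addr0.
have [->|m1] := eqVneq m (U_(0%R))%MM.
  by rewrite U10 !mulr0 mulr1 add0r addr0.
have [->|m2] := eqVneq m (U_(1%R))%MM.
  by rewrite !mulr0 mulr1 !add0r.
rewrite !mulr0 !add0r.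
apply/eqP; rewrite mcoeff_eq0; apply/negP => /msize_mdeg_lt.
rewrite sL ltnS leq_eqVlt ltnS leqn0 mdeg_eq0 (negPf m0) orbF.
case/mdeg1P => -[[|[|i]] Hi] /eqP E.
- have O : Ordinal Hi = 0%R by apply/val_inj.
  by move: m1; rewrite E O eqxx.
- have O : Ordinal Hi = 1%R by apply/val_inj.
  by move: m2; rewrite E O eqxx.
- by [].
Qed.

Theorem mainTheorem4 (P : {poly int}) (a b : nat) :
  (2 < size P)%N ->
  (exists z1 z2 : CC, [/\ z1 != z2, root (polyCC P) z1 & root (polyCC P) z2]) ->
  (0 < a)%N -> (0 < b)%N -> a != b ->
  ~ (exists L Q : {mpoly CC[2]}, msize L = 2%N /\ abPoly a b P = L * Q).
Proof.
move=> sP [z1 [z2 [z12 rz1 rz2]]] a0 b0 ab [L [Q [sL E]]].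
set Pt := polyCC P.
have sPt : size Pt = size P.
  by apply: size_map_inj_poly; [exact: intr_inj | rewrite mulr0z].
have a0' : (a%:R : CC) != 0 by rewrite pnatr_eq0 -lt0n.
have b0' : (b%:R : CC) != 0 by rewrite pnatr_eq0 -lt0n.
set g := L@_0%MM; set al := L@_U_(0); set be := L@_U_(1).
have Ld := L_dec L sL.
have key : forall x y : CC, g + al * x + be * y = 0 -> a%:R * Pt.[y] = b%:R * Pt.[x].
  move=> x y h; apply/eqP; rewrite -subr_eq0.
  pose v := fun i : 'I_2 => if val i == 0%N then x else y.
  have := congr1 (meval v) E.
  rewrite abPoly_meval mevalM => ->.
  rewrite {1}Ld !mevalD mevalC !mevalZ !mevalXU /=.
  by rewrite -/g -/al -/be h mul0r.
have sPt2 : (2 < size Pt)%N by rewrite sPt.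
have [be0|be0] := eqVneq be 0.
  have al0 : al != 0.
    apply/eqP => al0; move: sL; rewrite Ld -/g -/al -/be al0 be0 !scale0r !addr0 msizeC.
    by case: (g != 0).
  apply: (@no_const Pt a%:R _ sPt2 a0') => y.
  apply: (key (- g / al) y); rewrite be0; field; exact: al0.
have [al0|al0] := eqVneq al 0.
  apply: (@no_const Pt b%:R _ sPt2 b0') => x.
  symmetry; apply: (key x (- g / be)); rewrite al0; field; exact: be0.
set m := - al / be; set c := - g / be.
have m0 : m != 0 by rewrite /m mulf_neq0 ?oppr_eq0 ?invr_eq0.
have H : forall x, a%:R * Pt.[m * x + c] = b%:R * Pt.[x].
  move=> x; apply: key; rewrite /m /c; field; exact: be0.
set q0 : {poly CC} := m%:P * 'X + c%:P.
have D : a%:R *: (Pt \Po q0) = b%:R *: Pt.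
  apply/eqP; rewrite -subr_eq0; apply/eqP; apply: inf_roots => x.
  by rewrite /root !hornerE horner_comp /q0 hornerMXaddC hornerC H subrr.
have sq0 : size q0 = 2%N.
  by rewrite /q0 size_MXaddC polyC_eq0 (negPf m0) /= size_polyC m0.
have lq0 : lead_coef q0 = m.
  rewrite /q0 lead_coefDl ?lead_coefMX ?lead_coefC //.
  by rewrite size_polyC size_mul ?polyX_eq0 ?polyC_eq0 // size_polyC m0 size_polyX; case: (c != 0).
have Pt0 : lead_coef Pt != 0.
  by rewrite lead_coef_eq0 -size_poly_gt0; apply: leq_trans sPt2.
have hm : a%:R * m ^+ (size Pt).-1 = (b%:R : CC).
  have := congr1 (fun p : {poly CC} => lead_coef p) D; rewrite /= !lead_coefZ.
  rewrite lead_coef_comp ?sq0 // lq0 mulrCA [b%:R * _]mulrC; exact: mulfI.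
set d := (size Pt).-1.
have d0 : (0 < d)%N by rewrite /d -ltnS prednK ?(leq_trans _ sPt2) // ltnW.
have hpow : forall k, (0 < k)%N -> m ^+ k != 1.
  move=> k k0; apply/eqP => mk1.
  have := congr1 (fun z : CC => z ^+ k) hm; rewrite /= exprMn -exprM mulnC exprM mk1 expr1n mulr1.
  rewrite -!natrX => /eqP; rewrite eqr_nat eqn_exp2r // => /eqP abe.
  by rewrite abe eqxx in ab.
have m1 : 1 - m != 0 by rewrite subr_eq0 eq_sym -(expr1 m) hpow.
set p := c / (1 - m).
have fixp : m * p + c = p by rewrite /p; field; exact: m1.
have step : forall r, root Pt r -> root Pt (m * r + c).
  move=> r /eqP r0; apply/eqP; have := H r; rewrite r0 mulr0 => /eqP.
  by rewrite mulf_eq0 (negPf a0') => /eqP.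
have iter : forall r, root Pt r -> forall n : nat, root Pt (p + m ^+ n * (r - p)).
  move=> r r0; elim=> [|n IH]; first by rewrite expr0 mul1r addrC subrK.
  have -> : p + m ^+ n.+1 * (r - p) = m * (p + m ^+ n * (r - p)) + c.
    apply/eqP; rewrite -subr_eq0; apply/eqP.
    have -> : p + m ^+ n.+1 * (r - p) - (m * (p + m ^+ n * (r - p)) + c) = p - (m * p + c).
      by rewrite exprS; ring.
    by rewrite fixp subrr.
  exact: step.
have [r [rr rp]] : exists r, root Pt r /\ r != p.
  have [e|ne] := eqVneq z1 p; last by exists z1.
  by exists z2; split => //; rewrite -e eq_sym.
have : (size (mkseq (fun n : nat => (p + m ^+ n * (r - p))%R) (size Pt)) < size Pt)%N.
  apply: max_poly_roots.
  - by rewrite -size_poly_gt0; apply: leq_trans sPt2.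
  - by apply/allP => x; rewrite /mkseq => /mapP [k _ ->]; apply: iter.
  apply: mkseq_uniq => i j /addrI e.
  have rp0 : r - p != 0 by rewrite subr_eq0.
  have hij := mulIf rp0 e.
  have gen : forall i j, (i < j)%N -> m ^+ i = m ^+ j -> False.
    move=> i' j' lt e'; move: (hpow (j' - i')%N); rewrite subn_gt0 lt => /(_ isT) /eqP; apply.
    have ee : m ^+ i' * m ^+ (j' - i') = m ^+ i' * 1 by rewrite -exprD subnKC ?(ltnW lt) // mulr1 e'.
    have mi0 : m ^+ i' != 0 by rewrite expf_neq0.
    exact: (mulfI mi0 ee).
  case: (ltngtP i j) => // hl; first by case: (gen _ _ hl hij).
  by case: (gen _ _ hl (esym hij)).
by rewrite size_mkseq ltnn.
Qed.
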